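(* Let $\Omega=\{\omega_1,\omega_2\}$ with $0<\omega_1<\omega_2$ and let $\mu^*$ be an aggregate market. Then every point in the interior of the surplus triangle of $\mu^*$ is rationalizable.
   Context: A monopolist with zero marginal cost sells one good to a unit mass of consumers with valuations in $\Omega$; a market is a probability vector over $\Omega$. Let $s(p,\omega)=p$ if $\omega\ge p$ and $0$ otherwise, $b(p,\omega)=\omega-p$ if $\omega\ge p$ and $0$ otherwise; in each market $\mu$ the monopolist charges $p^*(\mu)\in\arg\max_p\sum_i s(p,\omega_i)\mu_i$. A segmentation of $\mu^*$ is a finitely supported distribution $\tau$ over markets with $\sum_{\mu^s}\tau(\mu^s)\mu^s=\mu^*$. For a segmentation $\tau$, consumer surplus is $CS=\sum_{\mu^s}\tau(\mu^s)\sum_j b(p^*(\mu^s),\omega_j)\mu^s_j$ and producer surplus (excluding information cost) is $PS=\sum_{\mu^s}\tau(\mu^s)\sum_j s(p^*(\mu^s),\omega_j)\mu^s_j$. The surplus triangle of $\mu^*$ is the set of pairs $(CS,PS)$ with $CS\ge0$, $PS\ge\pi^*$ and $CS+PS\le w^*$, where $\pi^*=\max_p\sum_i s(p,\omega_i)\mu^*_i$ is the uniform monopoly profit and $w^*=\sum_i\omega_i\mu^*_i$ is the efficient total surplus. A posterior-separable, strictly convex cost function is one of the form $C(\tau)=\sum_{\mu^s}\tau(\mu^s)c(\mu^s)-c(\mu^* )$ with $c$ a strictly convex continuous function on markets (e.g. $c=-kH$ for Shannon entropy $H$). Given such $C$, a segmentation is optimal if it maximizes $\sum_{\mu^s}\tau(\mu^s)\sum_i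 s(p^*(\mu^s),\omega_i)\mu^s_i-C(\tau)$ over all segmentations of $\mu^*$. A pair $(CS,PS)$ is rationalizable if there exist a segmentation $\tau$ and a strictly convex posterior-separable cost function $C$ such that $\tau$ is optimal for the monopolist under $C$ and $\tau$ yields that $(CS,PS)$ pair. *)

(* Defs.v *)
From HB Require Import structures.
From mathcomp Require Import all_boot all_order all_algebra.
From mathcomp Require Import all_classical all_reals all_analysis.
Set Implicit Arguments. Unset Strict Implicit. Unset Printing Implicit Defensive.
Import Order.TTheory GRing.Theory Num.Theory.
Import numFieldNormedType.Exports.
Local Open Scope classical_set_scope.
Local Open Scope ring_scope.

Section Monopoly.
Variables (R : realType) (n : nat).

(* valuations omega_i = w ord0 i ; a market is a probability row vector *)
Definition market (m : 'rV[R]_n) : Prop :=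
  (forall i, 0 <= m ord0 i) /\ \sum_(i < n) m ord0 i = 1.

Definition seller (p om : R) : R := if p <= om then p else 0.
Definition buyer (p om : R) : R := if p <= om then om - p else 0.

Definition profit (w m : 'rV[R]_n) (p : R) : R :=
  \sum_(i < n) seller p (w ord0 i) * m ord0 i.
Definition csurplus (w m : 'rV[R]_n) (p : R) : R :=
  \sum_(i < n) buyer p (w ord0 i) * m ord0 i.

Definition opt_price (w m : 'rV[R]_n) (p : R) : Prop :=
  forall q : R, profit w m q <= profit w m p.

Definition unif_profit (w mu : 'rV[R]_n) : R := sup (range (profit w mu)).
Definition eff_surplus (w mu : 'rV[R]_n) : R :=
  \sum_(i < n) w ord0 i * mu ord0 i.

(* A segmentation: a finite list of (weight, segment market, price charged
   there). *)
Definition seg := seq (R * 'rV[R]_n * R).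
Definition sw (x : R * 'rV[R]_n * R) : R := x.1.1.
Definition sm (x : R * 'rV[R]_n * R) : 'rV[R]_n := x.1.2.
Definition sp (x : R * 'rV[R]_n * R) : R := x.2.

Definition is_segmentation (mu : 'rV[R]_n) (tau : seg) : Prop :=
  [/\ forall x, x \in tau -> 0 < sw x /\ market (sm x),
      uniq (map sm tau),
      \sum_(x <- tau) sw x = 1 &
      \sum_(x <- tau) sw x *: sm x = mu].

Definition priced (w : 'rV[R]_n) (tau : seg) : Prop :=
  forall x, x \in tau -> opt_price w (sm x) (sp x).

Definition PS (w : 'rV[R]_n) (tau : seg) : R :=
  \sum_(x <- tau) sw x * profit w (sm x) (sp x).
Definition CS (w : 'rV[R]_n) (tau : seg) : R :=
  \sum_(x <- tau) sw x * csurplus w (sm x) (sp x).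

Definition cost (c : 'rV[R]_n -> R) (mu : 'rV[R]_n) (tau : seg) : R :=
  \sum_(x <- tau) sw x * c (sm x) - c mu.

Definition strictly_convex_cont (c : 'rV[R]_n -> R) : Prop :=
  {within [set m | market m], continuous c} /\
  (forall a b (t : R), market a -> market b -> a != b -> 0 < t < 1 ->
     c (t *: a + (1 - t) *: b) < t * c a + (1 - t) * c b).

Definition optimal_seg (w : 'rV[R]_n) (c : 'rV[R]_n -> R)
    (mu : 'rV[R]_n) (tau : seg) : Prop :=
  forall tau', is_segmentation mu tau' -> priced w tau' ->
    PS w tau' - cost c mu tau' <= PS w tau - cost c mu tau.

Definition rationalizable (w mu : 'rV[R]_n) (cs ps : R) : Prop :=
  exists (tau : seg) (c : 'rV[R]_n -> R),
    [/\ strictly_convex_cont c, is_segmentation mu tau, priced w tau,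
        optimal_seg w c mu tau & CS w tau = cs /\ PS w tau = ps].

Definition in_interior_triangle (w mu : 'rV[R]_n) (cs ps : R) : Prop :=
  [/\ 0 < cs, unif_profit w mu < ps & cs + ps < eff_surplus w mu].

End Monopoly.

(* Main.v *)
Require Import Defs.
From HB Require Import structures.
From mathcomp Require Import all_boot all_order all_algebra.
From mathcomp Require Import all_classical all_reals all_analysis.
From mathcomp Require Import lra ring.
Import Order.TTheory GRing.Theory Num.Theory.
Import numFieldNormedType.Exports.
Local Open Scope ring_scope.

Section H.
Variable R : realType.

Lemma sum2 (F : 'I_2 -> R) : \sum_(i < 2) F i = F ord0 + F ord_max.
Proof.
rewrite big_ord_recr big_ord_recr big_ord0 /= add0r.
by congr (F _ + F _); apply/val_inj.
Qed.

Lemma ord2 (j : 'I_2) : j = ord0 \/ j = ord_max.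
Proof.
case: j => [[|[|k]] hk]; [left|right|]; try by apply/val_inj.
by [].
Qed.

Definition mk (u v : R) : 'rV[R]_2 := \row_j (if j == ord0 then u else v).

Lemma mk0 u v : mk u v ord0 ord0 = u.
Proof. by rewrite mxE eqxx. Qed.
Lemma mk1 u v : mk u v ord0 ord_max = v.
Proof. by rewrite mxE. Qed.

Lemma market2 (m : 'rV[R]_2) : market m ->
  [/\ 0 <= m ord0 ord0, 0 <= m ord0 ord_max & m ord0 ord0 + m ord0 ord_max = 1].
Proof. by move=> [h1 h2]; rewrite sum2 in h2; split. Qed.

Lemma market_mk u v : 0 <= u -> 0 <= v -> u + v = 1 -> market (mk u v).
Proof.
move=> hu hv huv; split; last by rewrite sum2 mk0 mk1.
by move=> i; case: (ord2 i) => ->; rewrite ?mk0 ?mk1.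
Qed.

Lemma profit2 (w m : 'rV[R]_2) p :
  profit w m p = seller p (w ord0 ord0) * m ord0 ord0
               + seller p (w ord0 ord_max) * m ord0 ord_max.
Proof. by rewrite /profit sum2. Qed.

Lemma cs2 (w m : 'rV[R]_2) p :
  csurplus w m p = buyer p (w ord0 ord0) * m ord0 ord0
               + buyer p (w ord0 ord_max) * m ord0 ord_max.
Proof. by rewrite /csurplus sum2. Qed.

Lemma profit_le (w m : 'rV[R]_2) p : market m ->
  0 < w ord0 ord0 -> w ord0 ord0 < w ord0 ord_max ->
  profit w m p <= Num.max (w ord0 ord0) (w ord0 ord_max * m ord0 ord_max).
Proof.
move=> /market2 [h0 h1 hs] ha hab; rewrite profit2 /seller.
set a := w ord0 ord0 in ha hab *; set b := w ord0 ord_max in hab *.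
set m0 := m ord0 ord0 in h0 hs *; set m1 := m ord0 ord_max in h1 hs *.
case: (lerP p a) => hpa.
  have -> : p <= b by apply: le_trans (ltW hab).
  rewrite le_max; apply/orP; left.
  have -> : p * m0 + p * m1 = p by rewrite -mulrDr hs mulr1.
  by [].
case: (lerP p b) => hpb; rewrite le_max; apply/orP.
  by right; rewrite mul0r add0r ler_wpM2r.
by left; rewrite !mul0r addr0 ltW.
Qed.

Definition F (k al be r z : R) := al + be * z + k * ((z - r) * (z - r)).

Lemma F_conv k al be r x y t : 0 < k -> x != y -> 0 < t < 1 ->
  F k al be r (t * x + (1 - t) * y) < t * F k al be r x + (1 - t) * F k al be r y.
Proof.
move=> hk hxy /andP[t0 t1]; rewrite /F.
have hd : 0 < (x - y) * (x - y).
  have hne : x - y != 0 by rewrite subr_eq0.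
  by rewrite lt_def mulf_neq0 //= -expr2 sqr_ge0.
have hp : 0 < k * (t * (1 - t)) * ((x - y) * (x - y)).
  by apply: mulr_gt0 => //; apply: mulr_gt0 => //; apply: mulr_gt0 => //; rewrite subr_gt0.
have E : t * (al + be * x + k * ((x - r) * (x - r))) +
   (1 - t) * (al + be * y + k * ((y - r) * (y - r))) -
   (al + be * (t * x + (1 - t) * y) + k * ((t * x + (1 - t) * y - r) * (t * x + (1 - t) * y - r)))
   = k * (t * (1 - t)) * ((x - y) * (x - y)) by ring.
lra.
Qed.

Lemma Fc (k al be r : R) : continuous (F k al be r).
Proof.
move=> z; rewrite /F.
apply: cvgD.
  apply: cvgD; first exact: cvg_cst.
  apply: cvgM; [exact: cvg_cst| exact: cvg_id].
apply: cvgM; first exact: cvg_cst.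
by apply: cvgM; apply: cvgB; (exact: cvg_id || exact: cvg_cst).
Qed.

Lemma maxF_conv k a1 b1 r1 a2 b2 r2 x y t : 0 < k -> x != y -> 0 < t < 1 ->
  Num.max (F k a1 b1 r1 (t * x + (1 - t) * y)) (F k a2 b2 r2 (t * x + (1 - t) * y))
  < t * Num.max (F k a1 b1 r1 x) (F k a2 b2 r2 x)
    + (1 - t) * Num.max (F k a1 b1 r1 y) (F k a2 b2 r2 y).
Proof.
move=> hk hq ht; have /andP[t0 t1] := ht.
have t0' : 0 <= t by apply: ltW.
have t1' : 0 <= 1 - t by rewrite subr_ge0 ltW.
rewrite gt_max; apply/andP; split;
  (apply: lt_le_trans (F_conv _ _ _ _ _ _ _ hk hq ht) _; apply: lerD; apply: ler_wpM2l => //;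
   by rewrite le_max lexx ?orbT).
Qed.

End H.
Arguments Fc {R}.
Arguments F {R}.
Arguments mk {R}.
Arguments F_conv {R}.
Arguments mk0 {R}.
Arguments mk1 {R}.


Theorem proposition5 (R : realType) (w mu : 'rV[R]_2) :
  0 < w ord0 ord0 -> w ord0 ord0 < w ord0 ord_max ->
  market mu ->
  forall cs ps : R, in_interior_triangle w mu cs ps ->
    rationalizable w mu cs ps.
Proof.
move=> ha hab hmu cs ps [hcs hps hts].
have [h0 h1 hs] := market2 _ _ hmu.
have hub : has_ubound (range (profit w mu)).
  by exists (Num.max (w ord0 ord0) (w ord0 ord_max * mu ord0 ord_max)) => _ [p _ <-]; exact: profit_le.
have pa : profit w mu (w ord0 ord0) = w ord0 ord0.
  by rewrite profit2 /seller lexx (ltW hab) -mulrDr hs mulr1.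
have pb : profit w mu (w ord0 ord_max) = w ord0 ord_max * mu ord0 ord_max.
  by rewrite profit2 /seller (leNgt (w ord0 ord_max)) hab /= lexx mul0r add0r.
have hsa : w ord0 ord0 <= unif_profit w mu.
  by rewrite /unif_profit -{1}pa; apply: (ub_le_sup hub); exists (w ord0 ord0).
have hsb : w ord0 ord_max * mu ord0 ord_max <= unif_profit w mu.
  by rewrite /unif_profit -pb; apply: (ub_le_sup hub); exists (w ord0 ord_max).
have he : eff_surplus w mu = w ord0 ord0 * mu ord0 ord0 + w ord0 ord_max * mu ord0 ord_max.
  by rewrite /eff_surplus sum2.
rewrite he in hts.
set a := w ord0 ord0 in ha hab hsa hsb hts pa pb *.
set b := w ord0 ord_max in hab hsb hts pb *.
set m0 := mu ord0 ord0 in h0 hs hts *.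
set m1 := mu ord0 ord_max in h1 hs hts hsb pb *.
have hb : 0 < b by apply: lt_trans hab.
have hba : 0 < b - a by rewrite subr_gt0.
have [x hx] : exists x, cs = (b - a) * x.
  by exists (cs / (b - a)); rewrite [RHS]mulrC divfK // gt_eqF.
have [y hy] : exists y, cs + ps - b * m1 = a * y.
  by exists ((cs + ps - b * m1) / a); rewrite [RHS]mulrC divfK // gt_eqF.
have hx0 : 0 < x by rewrite hx pmulr_rgt0 in hcs.
have hy0 : 0 < y.
  have : 0 < a * y by rewrite -hy; lra.
  by rewrite pmulr_rgt0.
have hym : y < m0.
  have : a * y < a * m0 by rewrite -hy; lra.
  by rewrite ltr_pM2l.
have hc1 : b * x < a * (x + y) by lra.
have hc2 : a * (1 - x - y) < b * (m1 - x) by lra.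
have hmx : 0 < m1 - x.
  have : 0 < a * (m0 - y) by apply: mulr_gt0 => //; lra.
  have ham : a * (m0 + m1) = a by rewrite hs mulr1.
  have : 0 < (b - a) * (m1 - x) by lra.
  by rewrite pmulr_rgt0.
have ht1 : 0 < x + y by lra.
have ht2 : 0 < 1 - x - y by lra.
have [q1 [e1 hq1a hq1b]] : exists q1, [/\ q1 * (x + y) = x, 0 < q1 & q1 < 1].
  exists (x / (x + y)); split; first by rewrite divfK // gt_eqF.
    by rewrite divr_gt0.
  by rewrite ltr_pdivrMr // mul1r; lra.
have [q2 [e2 hq2a hq2b]] : exists q2, [/\ q2 * (1 - x - y) = m1 - x, 0 < q2 & q2 <= 1].
  exists ((m1 - x) / (1 - x - y)); split; first by rewrite divfK // gt_eqF.
    by rewrite divr_gt0.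
  by rewrite ler_pdivrMr // mul1r; lra.
have hbq1 : b * q1 < a.
  have : b * q1 * (x + y) < a * (x + y) by rewrite -mulrA e1.
  by rewrite ltr_pM2r.
have hbq2 : a < b * q2.
  have : a * (1 - x - y) < b * q2 * (1 - x - y) by rewrite -mulrA e2.
  by rewrite ltr_pM2r.
have hd : 0 < q2 - q1.
  have : 0 < b * (q2 - q1) by lra.
  by rewrite pmulr_rgt0.
pose K := Num.min (a - b * q1) (b * q2 - a).
have hK : 0 < K by rewrite lt_min; apply/andP; split; lra.
have hKA : K <= a - b * q1 by rewrite ge_min lexx.
have hKB : K <= b * q2 - a by rewrite ge_min lexx orbT.
have [k [hk hkd]] : exists k, 0 < k /\ k * ((q2 - q1) * (q2 - q1)) = K.
  have hdd : 0 < (q2 - q1) * (q2 - q1) by apply: mulr_gt0.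
  exists (K / ((q2 - q1) * (q2 - q1))); split; first by rewrite divr_gt0.
  by rewrite divfK // gt_eqF.
have sq0 : forall z : R, 0 <= z * z by move=> z; rewrite -expr2 sqr_ge0.
pose c := (fun m : 'rV[R]_2 => F k a 0 q1 (m ord0 ord_max)) \max
          (fun m : 'rV[R]_2 => F k 0 b q2 (m ord0 ord_max)).
have hcge : forall m, market m -> forall p, profit w m p <= c m.
  move=> m hm p; apply: le_trans (profit_le _ _ _ p hm ha hab) _; rewrite -/a -/b.
  rewrite ge_max; apply/andP; split; rewrite /c /= le_max; apply/orP; [left|right];
    rewrite /F; have := sq0 (m ord0 ord_max - q1); have := sq0 (m ord0 ord_max - q2);
    move=> s1 s2; have := mulr_ge0 (ltW hk) s1; have := mulr_ge0 (ltW hk) s2; lra.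
pose seg1 := mk (1 - q1) q1.
pose seg2 := mk (1 - q2) q2.
have hseg1 : market seg1 by apply: market_mk; lra.
have hseg2 : market seg2 by apply: market_mk; lra.
have cseg1 : c seg1 = a.
  rewrite /c /= mk1 max_l /F.
    by rewrite subrr mulr0 mulr0 mul0r; lra.
  have -> : (q1 - q2) * (q1 - q2) = (q2 - q1) * (q2 - q1) by ring.
  rewrite hkd subrr mulr0 mulr0 mul0r; lra.
have cseg2 : c seg2 = b * q2.
  rewrite /c /= mk1 max_r /F.
    by rewrite subrr mulr0 mulr0; lra.
  rewrite hkd subrr mulr0 mulr0; lra.
have ps1 : profit w seg1 a = a.
  by rewrite profit2 mk0 mk1 /seller -/a -/b lexx (ltW hab); ring.
have ps2 : profit w seg2 b = b * q2.
  by rewrite profit2 mk0 mk1 /seller -/a -/b (leNgt b a) hab /= lexx; ring.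
exists [:: (x + y, seg1, a); (1 - x - y, seg2, b)], c; split.
- split.
  + apply: continuous_subspaceT => M; apply: continuous_max.
      exact: (continuous_comp (@coord_continuous R 1 2 ord0 ord_max M) (Fc k a 0 q1 _)).
    exact: (continuous_comp (@coord_continuous R 1 2 ord0 ord_max M) (Fc k 0 b q2 _)).
  + move=> A B t hA hB hAB ht.
    have [hA0 hA1 hAs] := market2 _ _ hA.
    have [hB0 hB1 hBs] := market2 _ _ hB.
    have hq : A ord0 ord_max != B ord0 ord_max.
      apply: contra hAB => /eqP e; apply/eqP/rowP => j.
      have -> : (0 : 'I_1) = ord0 by apply/val_inj.
      by case: (ord2 j) => ->; [lra | exact e].
    have zq : (t *: A + (1 - t) *: B) ord0 ord_max = t * A ord0 ord_max + (1 - t) * B ord0 ord_max.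
      by rewrite !mxE.
    rewrite /c /= zq; exact: maxF_conv.
- split.
  + move=> z; rewrite !inE => /orP[/eqP->|/eqP->]; rewrite /sw /sm /=; by split.
  + rewrite /= inE andbT; apply/negP => /eqP E.
    have := congr1 (fun m : 'rV[R]_2 => m ord0 ord_max) E.
    rewrite /= /seg1 /seg2 !mk1 => E'; move: hd; by rewrite E' subrr ltxx.
  + rewrite !big_cons big_nil /sw /=; ring.
  + rewrite !big_cons big_nil /sw /sm /=.
    apply/rowP => j; have -> : (0 : 'I_1) = ord0 by apply/val_inj.
    have hf : (ord_max == ord0 :> 'I_2) = false by [].
    rewrite !mxE; case: (ord2 j) => ->; rewrite ?eqxx ?hf -/m0 -/m1.
      by rewrite addr0; clear -e1 e2 hs; lra.
    by rewrite addr0; clear -e1 e2 hs; lra.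
- move=> z; rewrite !inE => /orP[/eqP->|/eqP->] q; rewrite /sm /sp /=.
    rewrite ps1; apply: le_trans (profit_le _ _ _ q hseg1 ha hab) _.
    by rewrite -/a -/b /seg1 mk1 ge_max lexx (ltW hbq1).
  rewrite ps2; apply: le_trans (profit_le _ _ _ q hseg2 ha hab) _.
  by rewrite -/a -/b /seg2 mk1 ge_max lexx (ltW hbq2).
- move=> tau' [hpos _ _ _] _.
  have H : \sum_(z <- tau') sw z * profit w (sm z) (sp z) <= \sum_(z <- tau') sw z * c (sm z).
    rewrite big_seq [X in _ <= X]big_seq; apply: ler_sum => z hz.
    have [hz0 hzm] := hpos z hz; apply: ler_wpM2l; [exact: ltW | exact: hcge].
  move: H; rewrite /PS /cost.
  set S1 := \sum_(z <- tau') _.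
  set S2 := \sum_(z <- tau') _.
  rewrite !big_cons !big_nil /sw /sm /sp /= ps1 ps2 cseg1 cseg2.
  move=> H; clear -H; lra.
- split.
  + rewrite /CS !big_cons big_nil /sw /sm /sp /= !cs2 /seg1 /seg2 !mk0 !mk1 /buyer -/a -/b.
    rewrite !lexx (ltW hab) (leNgt b a) hab /= hx.
    have <- : (b - a) * (q1 * (x + y)) = (b - a) * x by rewrite e1.
    ring.
  + rewrite /PS !big_cons big_nil /sw /sm /sp /= ps1 ps2.
    have E2 : b * (q2 * (1 - x - y)) = b * (m1 - x) by rewrite e2.
    clear -E2 hx hy; lra.
Qed.
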